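(* For all $t\ge1$, $r\in[-1,1]$ and $w\in\mathbb{R}^3\setminus\{0\}$ we have $\kappa(a_tu_rw)\ge 1$ if $\kappa(w)\ge e^{-2t}$, and $\kappa(a_tu_rw)\ge e^{2t}\kappa(w)$ if $\kappa(w)<e^{-2t}$. Furthermore, if $\kappa(a_tu_rw)<1$ then $\kappa(a_tu_rw)=e^{2t}\kappa(w)$.
   Context: $Q_0(v)=v_2^2-2v_1v_3$, $a_t=\mathrm{diag}(e^t,1,e^{-t})$, $u_r=\begin{pmatrix}1&r&r^2/2\\0&1&r\\0&0&1\end{pmatrix}$. For $w=(w_1,w_2,w_3)\ne0$: if $w_2=w_3=0$, set $\rho(w)=\infty$, $\kappa_0(w)=\infty$, $\kappa(w)=1$. Otherwise $\rho(w)=-w_2/w_3\in[-\infty,\infty]$, $\kappa_0(w)=Q_0(w)/w_3^2\in[-\infty,\infty]$, and $\kappa(w)=|\kappa_0(w)|$ if $|\kappa_0(w)|<1$ and $|\rho(w)|<2$, while $\kappa(w)=1$ otherwise. *)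

(* Defs.v *)
From Stdlib Require Import Reals.
From Coquelicot Require Import Coquelicot.
Open Scope R_scope.

Definition vec3 := (R * R * R)%type.
Definition v1 (w : vec3) : R := fst (fst w).
Definition v2 (w : vec3) : R := snd (fst w).
Definition v3 (w : vec3) : R := snd w.

Definition Q0 (w : vec3) : R := v2 w ^ 2 - 2 * v1 w * v3 w.

(* a_t = diag(e^t, 1, e^{-t}) acting on column vectors *)
Definition a_act (t : R) (w : vec3) : vec3 :=
  (exp t * v1 w + 0 * v2 w + 0 * v3 w,
   0 * v1 w + 1 * v2 w + 0 * v3 w,
   0 * v1 w + 0 * v2 w + exp (- t) * v3 w).

(* u_r = [[1, r, r^2/2], [0, 1, r], [0, 0, 1]] acting on column vectors *)
Definition u_act (r : R) (w : vec3) : vec3 :=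
  (1 * v1 w + r * v2 w + (r ^ 2 / 2) * v3 w,
   0 * v1 w + 1 * v2 w + r * v3 w,
   0 * v1 w + 0 * v2 w + 1 * v3 w).

(* rho(w) = -w2/w3 in [-oo, +oo] (defined when (w2,w3) <> (0,0));
   when w3 = 0 (so w2 <> 0) the quotient is infinite, with sign -sign(w2). *)
Definition rho (w : vec3) : Rbar :=
  if Req_EM_T (v3 w) 0 then
    (if Rlt_dec 0 (v2 w) then m_infty else p_infty)
  else Finite (- v2 w / v3 w).

(* kappa_0(w) = Q0(w)/w3^2 in [-oo, +oo]; when w3 = 0 (and w2 <> 0),
   Q0(w) = w2^2 > 0 so the quotient is +oo. If w2 = w3 = 0, kappa_0 = oo. *)
Definition kappa0 (w : vec3) : Rbar :=
  if Req_EM_T (v3 w) 0 then p_infty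
  else Finite (Q0 w / v3 w ^ 2).

Definition kappa_gen (w : vec3) : R :=
  if Rbar_lt_dec (Rbar_abs (kappa0 w)) 1 then
    (if Rbar_lt_dec (Rbar_abs (rho w)) 2 then real (Rbar_abs (kappa0 w)) else 1)
  else 1.

Definition kappa (w : vec3) : R :=
  if Req_EM_T (v2 w) 0 then
    (if Req_EM_T (v3 w) 0 then 1 else kappa_gen w)
  else kappa_gen w.

(* Main.v *)
Require Import Defs.
From Stdlib Require Import Reals Lra Psatz.
From Coquelicot Require Import Coquelicot.
Open Scope R_scope.

Lemma kappa_spec (w : vec3) :
  (v3 w = 0 /\ kappa w = 1) \/
  (v3 w <> 0 /\
   ((Rabs (Q0 w / v3 w ^ 2) < 1 /\ Rabs (- v2 w / v3 w) < 2 /\ kappa w = Rabs (Q0 w / v3 w ^ 2))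
    \/ (~ (Rabs (Q0 w / v3 w ^ 2) < 1 /\ Rabs (- v2 w / v3 w) < 2) /\ kappa w = 1))).
Proof.
  unfold kappa, kappa_gen, kappa0, rho.
  destruct (Req_EM_T (v3 w) 0) as [H3|H3].
  - left; split; auto.
    destruct (Req_EM_T (v2 w) 0);
    repeat match goal with |- context [Rbar_lt_dec ?a ?b] => destruct (Rbar_lt_dec a b) end;
    simpl in *; try tauto.
  - right; split; auto.
    destruct (Req_EM_T (v2 w) 0);
    repeat match goal with |- context [Rbar_lt_dec ?a ?b] => destruct (Rbar_lt_dec a b) end;
    simpl in *; try tauto.
Qed.

Theorem lemma3p7 (t r : R) (w : vec3) :
  1 <= t -> -1 <= r <= 1 -> w <> (0, 0, 0) ->
  (exp (-2 * t) <= kappa w -> 1 <= kappa (a_act t (u_act r w))) /\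
  (kappa w < exp (-2 * t) -> exp (2 * t) * kappa w <= kappa (a_act t (u_act r w))) /\
  (kappa (a_act t (u_act r w)) < 1 -> kappa (a_act t (u_act r w)) = exp (2 * t) * kappa w).
Proof.
  intros Ht Hr _.
  set (v := a_act t (u_act r w)).
  set (a := exp t).
  assert (Ha2 : 2 < a).
  { unfold a. assert (H1 := exp_ineq1 1 ltac:(lra)).
    assert (exp 1 <= exp t) by (destruct (Req_dec t 1) as [->|]; [lra| left; apply exp_increasing; lra]). lra. }
  assert (Hai : exp (- t) = / a) by (unfold a; apply exp_Ropp).
  assert (He2 : exp (2 * t) = a ^ 2).
  { unfold a. replace (2 * t) with (t + t) by ring. rewrite exp_plus. ring. }
  assert (Hem2 : exp (-2 * t) = / a ^ 2).
  { rewrite <- He2. replace (-2 * t) with (- (2 * t)) by ring. apply exp_Ropp. }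
  rewrite He2, Hem2.
  assert (Hv3 : v3 v = / a * v3 w) by (unfold v, a_act, u_act, v3; simpl; fold a; rewrite Hai; ring).
  assert (Hv2 : v2 v = v2 w + r * v3 w) by (unfold v, a_act, u_act, v2, v3; simpl; ring).
  assert (HQ : Q0 v = Q0 w).
  { unfold Q0, v, a_act, u_act, v1, v2, v3; simpl. fold a. rewrite Hai. field. lra. }
  assert (Hka : forall x, kappa x <= 1).
  { intro x. destruct (kappa_spec x) as [[_ ->]|[_ [[H1 [_ ->]]|[_ ->]]]]; lra. }
  assert (Ha0 : 0 < a) by lra.
  assert (Hia : 0 < / a) by (apply Rinv_0_lt_compat; lra).
  assert (Hia2 : 0 < / a ^ 2) by (apply Rinv_0_lt_compat; nra).
  assert (Hlt1 : / a ^ 2 < 1). { rewrite <- Rinv_1. apply Rinv_lt_contravar; nra. }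
  destruct (kappa_spec w) as [[Hw3 Hkw]|[Hw3 Hw]].
  - assert (v3 v = 0) by (rewrite Hv3, Hw3; ring).
    destruct (kappa_spec v) as [[_ Hkv]|[Hv _]]; [|tauto].
    rewrite Hkw, Hkv. split; [lra|split].
    + intro. assert (/ a ^ 2 < 1). { rewrite <- Rinv_1. apply Rinv_lt_contravar; nra. } lra.
    + lra.
  - assert (Hv3n : v3 v <> 0).
    { rewrite Hv3. apply Rmult_integral_contrapositive; split; lra. }
    set (K := Q0 w / v3 w ^ 2).
    set (x := - v2 w / v3 w).
    assert (HK : Q0 v / v3 v ^ 2 = a ^ 2 * K).
    { unfold K. rewrite HQ, Hv3. field. split; lra. }
    assert (HX : - v2 v / v3 v = a * (x - r)).
    { unfold x. rewrite Hv2, Hv3. field. split; lra. }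
    assert (HabsK : Rabs (a ^ 2 * K) = a ^ 2 * Rabs K).
    { rewrite Rabs_mult, Rabs_right; [ring|nra]. }
    assert (Hkey : kappa v < 1 ->
              kappa v = a ^ 2 * Rabs K /\ Rabs K < / a ^ 2 /\ Rabs x < 2).
    { intro Hlt. destruct (kappa_spec v) as [[Hc _]|[_ [[H1 [H2 H3]]|[_ Hc]]]];
        [tauto| |lra].
      rewrite HK, HabsK in H1, H3. rewrite HX in H2.
      split; [exact H3|split].
      - apply (Rmult_lt_reg_l (a ^ 2)); [nra|]. rewrite Rinv_r; [lra|nra].
      - rewrite Rabs_mult, (Rabs_right a) in H2 by lra.
        assert (Rabs (x - r) < 1).
        { apply (Rmult_lt_reg_l a); [lra|]. lra. }
        apply Rabs_def2 in H. apply Rabs_def1; lra. }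
    assert (Hw' : kappa w = Rabs K -> True) by auto.
    split; [|split].
    + intro Hge. destruct (Rlt_or_le (kappa v) 1) as [Hlt|]; [|lra].
      destruct (Hkey Hlt) as [E1 [E2 E3]].
      destruct Hw as [[_ [_ Hk]]|[Hn _]].
      * fold K in Hk. lra.
      * exfalso. apply Hn. fold K x. split; [|lra].
        assert (/ a ^ 2 < 1). { rewrite <- Rinv_1. apply Rinv_lt_contravar; nra. } lra.
    + intro Hlt. destruct (Rlt_or_le (kappa v) 1) as [Hv1|Hv1].
      * destruct (Hkey Hv1) as [E1 [E2 E3]].
        destruct Hw as [[_ [_ Hk]]|[_ Hk]]; fold K in Hk; [|lra].
        rewrite E1, Hk. lra.
      * assert (a ^ 2 * kappa w < 1).
        { apply (Rmult_lt_compat_l (a ^ 2)) in Hlt; [|nra].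
          rewrite Rinv_r in Hlt; [lra|nra]. }
        lra.
    + intro Hv1. destruct (Hkey Hv1) as [E1 [E2 E3]].
      destruct Hw as [[_ [_ Hk]]|[Hn _]].
      * fold K in Hk. rewrite E1, Hk. reflexivity.
      * exfalso. apply Hn. fold K x. split; [|lra].
        assert (/ a ^ 2 < 1). { rewrite <- Rinv_1. apply Rinv_lt_contravar; nra. } lra.
Qed.
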